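(* Let $v,k$ be positive integers with $k\mid v$ and $v\mid k^2$, and put $\lambda=k^2/v$. In $\mathbb{Z}_v$ let $A_X=\{0,1,\dots,k-1\}$ and $A_Y=\{ak, ak+1,\dots, ak+\lambda-1 : a=0,1,\dots,\tfrac{v}{k}-1\}$. Then (i) $\{A_X,A_Y\}$ is a $(v,2,k,\lambda)$-PSEDF in $\mathbb{Z}_v$, and (ii) $\{A_X,A_Y\}$ is a non-disjoint $(v,2,k,\lambda)$-SEDF in $\mathbb{Z}_v$.
   Context: Groups are written additively. For subsets $A,B$ of a group $G$, $\Delta(A,B)$ is the multiset $\{a-b:a\in A,b\in B\}$ and $\lambda G$ is the multiset with each element of $G$ exactly $\lambda$ times. For $G$ of order $v$ and $m>1$, a family of $k$-subsets $\{A_1,\dots,A_m\}$ of $G$ is a $(v,m,k,\lambda)$-PSEDF if $\Delta(A_i,A_j)=\lambda G$ for every $i\neq j$; it is a non-disjoint $(v,m,k,\lambda)$-SEDF if for each $i$ the multiset union $\bigcup_{j\neq i}\Delta(A_i,A_j)$ equals $\lambda G$. The sets need not be disjoint. *)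

(* Defs.v *)
From mathcomp Require Import all_boot all_order all_algebra.
Set Implicit Arguments. Unset Strict Implicit. Unset Printing Implicit Defensive.
Import GRing.Theory.
Local Open Scope ring_scope.

(* Multiplicity of g in the multiset Delta(A,B) = {a - b : a in A, b in B}. *)
Definition delta_mult (G : finZmodType) (A B : {set G}) (g : G) : nat :=
  #|[set p in setX A B | p.1 - p.2 == g]|.

Definition is_PSEDF (G : finZmodType) (v m k lam : nat) (F : 'I_m -> {set G}) :=
  [/\ #|G| = v, (1 < m)%N, (forall i, #|F i| = k) &
      forall i j, i != j -> forall g : G, delta_mult (F i) (F j) g = lam].

Definition is_SEDF (G : finZmodType) (v m k lam : nat) (F : 'I_m -> {set G}) :=
  [/\ #|G| = v, (1 < m)%N, (forall i, #|F i| = k) &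
      forall i (g : G), (\sum_(j < m | j != i) delta_mult (F i) (F j) g)%N = lam].

(* Z_v for v > 0, realised as 'I_(v.-1.+1) (so that Z_1 is the trivial group,
   unlike mathcomp's 'Z_1). *)
Definition Zv (v : nat) : finZmodType := 'I_(v.-1.+1).

Definition AX (v k : nat) : {set Zv v} := [set (inZp i : Zv v) | i : 'I_k].

Definition AY (v k : nat) : {set Zv v} :=
  [set (inZp (a * k + j) : Zv v) | a : 'I_(v %/ k), j : 'I_(k ^ 2 %/ v)].

Definition fam2 (v k : nat) : 'I_2 -> {set Zv v} :=
  fun i => if i == ord0 then AX v k else AY v k.

Arguments is_PSEDF {G} v m k lam F.
Arguments is_SEDF {G} v m k lam F.

(* Main.v *)
Require Import Defs.
From mathcomp Require Import all_boot all_order all_algebra.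
From mathcomp Require Import zify.
Import GRing.Theory.

Lemma card_lt (N m : nat) : (m <= N)%N -> #|[set x : 'I_N | (x < m)%N]| = m.
Proof.
move=> mN.
have -> : [set x : 'I_N | (x < m)%N] = widen_ord mN @: [set: 'I_m].
  apply/setP => x; rewrite inE; apply/idP/imsetP.
    by move=> xm; exists (Ordinal xm) => //; apply: val_inj.
  by case=> y _ ->; rewrite /= ltn_ord.
rewrite card_imset ?cardsT ?card_ord //.
by move=> a b /(congr1 val) /= ab; apply: val_inj.
Qed.

Local Open Scope ring_scope.
Lemma delta_alt (G : finZmodType) (A B : {set G}) g :
  delta_mult A B g = #|[set b in B | b + g \in A]|.
Proof.
rewrite /delta_mult.
have -> : [set p in setX A B | p.1 - p.2 == g] =
    (fun b => (b + g, b)) @: [set b in B | b + g \in A].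
  apply/setP => [[a b]]; rewrite !inE /=; apply/idP/imsetP.
    case/andP => /andP [aA bB] /eqP ab.
    exists b; first by rewrite inE bB -ab addrC subrK.
    by rewrite -ab addrC subrK.
  case=> y; rewrite inE => /andP [yB yA] [-> ->].
  by rewrite yA yB /= addrAC subrr add0r eqxx.
by rewrite card_imset // => x y [].
Qed.

Lemma delta_alt2 (G : finZmodType) (A B : {set G}) g :
  delta_mult A B g = #|[set a in A | a - g \in B]|.
Proof.
rewrite /delta_mult.
have -> : [set p in setX A B | p.1 - p.2 == g] =
    (fun a => (a, a - g)) @: [set a in A | a - g \in B].
  apply/setP => [[a b]]; rewrite !inE /=; apply/idP/imsetP.
    case/andP => /andP [aA bB] /eqP ab.
    exists a; first by rewrite inE aA -ab opprB addrC subrK.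
    by rewrite -ab opprB addrC subrK.
  case=> y; rewrite inE => /andP [yA yB] [-> ->].
  by rewrite yA yB /= opprB addrC subrK eqxx.
by rewrite card_imset // => x y [].
Qed.
Section S.
Variables (n k : nat).
Hypotheses (kpos : (0 < k)%N) (kv : (k %| n.+1)%N) (vk : (n.+1 %| k ^ 2)%N).
Let v := n.+1.
Let q := (v %/ k)%N.
Let lam := (k ^ 2 %/ v)%N.

Lemma facts : [/\ (q * k = v)%N, (lam * q = k)%N, (0 < q)%N, (0 < lam)%N & (lam <= k)%N].
Proof.
have e1 : (q * k = v)%N by rewrite /q divnK.
have e2 : (lam * v = k ^ 2)%N by rewrite /lam divnK.
have qp : (0 < q)%N by rewrite lt0n; apply/eqP => q0; move: e1; rewrite q0 mul0n /v.
have e3 : (lam * q = k)%N.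
  apply/eqP; rewrite -(eqn_pmul2r kpos) -mulnA e1 e2; by rewrite mulnn.
have lp : (0 < lam)%N by rewrite lt0n; apply/eqP => l0; move: e3 kpos; rewrite l0 mul0n => <-.
split => //. by rewrite -{1}e3 leq_pmulr.
Qed.

Lemma memAX (x : Zv v) : (x \in AX v k) = (x < k)%N.
Proof.
have [e1 _ qp _ _] := facts.
have kv' : (k <= v)%N by rewrite -e1 leq_pmull.
apply/imsetP/idP.
  case=> i _ ->; rewrite /= modn_small ?ltn_ord //.
  by apply: leq_trans (ltn_ord i) kv'.
move=> xk; exists (Ordinal xk) => //; apply: val_inj.
by rewrite /= modn_small.
Qed.

Lemma memAY (y : Zv v) : (y \in AY v k) = (y %% k < lam)%N.
Proof.
have [e1 e3 qp lp lk] := facts.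
apply/imset2P/idP.
  case=> a j _ _ ->; rewrite /=.
  have ak : (a * k + j < v)%N.
    have := ltn_ord a; have := ltn_ord j; rewrite -/q -/lam -e1.
    move=> jl aq. apply: (@leq_trans (a * k + k)).
      by rewrite ltn_add2l; apply: leq_trans jl lk.
    by rewrite -mulSnr leq_mul2r aq orbT.
  have ak2 : (a * k + j < n.+1)%N := ak.
  rewrite (modn_small ak2) modnMDl modn_small //; apply: leq_trans (ltn_ord j) lk.
move=> yl.
have yq : (y %/ k < q)%N by rewrite ltn_divLR // e1 ltn_ord.
exists (Ordinal yq) (Ordinal yl) => //; apply: val_inj => /=.
by rewrite -divn_eq modn_small.
Qed.

Lemma key (h : Zv v) : #|[set x in AX v k | x + h \in AY v k]| = lam.
Proof.
have [e1 e3 qp lp lk] := facts.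
have kv' : (k <= v)%N by rewrite -e1 leq_pmull.
pose f (i : 'I_k) : 'I_k := Ordinal (ltn_pmod (i + h) kpos).
have finj : injective f.
  move=> a b /(congr1 val) /= /eqP; rewrite eqn_modDr !modn_small ?ltn_ord //.
  by move/eqP => ab; apply: val_inj.
have -> : [set x in AX v k | x + h \in AY v k] =
    widen_ord kv' @: (f @^-1: [set j : 'I_k | (j < lam)%N]).
  apply/setP => x; rewrite !inE memAX memAY; apply/idP/imsetP.
    case/andP => xk hy; exists (Ordinal xk); last by apply: val_inj.
    rewrite !inE /=.
    by move: hy; rewrite /= (modn_dvdm _ kv).
  case=> i; rewrite !inE /= => il ->; rewrite /= ltn_ord /=.
  by rewrite (modn_dvdm _ kv).
rewrite card_imset; last by move=> a b /(congr1 val) /= ab; apply: val_inj.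
by rewrite card_preimset // card_lt.
Qed.

Lemma cardAX : #|AX v k| = k.
Proof.
have [e1 _ qp _ _] := facts.
have kv' : (k <= v)%N by rewrite -e1 leq_pmull.
apply: etrans (@card_lt v k kv'); apply: eq_card => x; by rewrite memAX inE.
Qed.

Lemma cardAY : #|AY v k| = k.
Proof.
have [e1 e3 qp lp lk] := facts.
have -> : AY v k = (fun p : 'I_q * 'I_lam => inZp (p.1 * k + p.2) : Zv v) @: setT.
  apply/setP => y; apply/imset2P/imsetP => [[a j _ _ ->]|[[a j] _ ->]].
    by exists (a, j).
  by exists a j.
rewrite card_imset; last first.
  move=> [a j] [b i] /(congr1 val) /=.
  have bnd : forall (a : 'I_q) (j : 'I_lam), (a * k + j < v)%N.
    move=> a0 j0.
    have := ltn_ord a0; have := ltn_ord j0; rewrite -e1.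
    move=> jl aq. apply: (@leq_trans (a0 * k + k)).
      by rewrite ltn_add2l; apply: leq_trans jl lk.
    by rewrite -mulSnr leq_mul2r aq orbT.
  rewrite (modn_small (bnd a j)) (modn_small (bnd b i)).
  move=> E.
  have jk : forall (j : 'I_lam), (j < k)%N by move=> j0; apply: leq_trans (ltn_ord j0) lk.
  have Ea : a = b :> nat.
    by have := congr1 (divn^~ k) E; rewrite !divnMDl // !divn_small ?jk // !addn0.
  have Ej : j = i :> nat by move: E; rewrite Ea => /eqP; rewrite eqn_add2l => /eqP.
  by congr pair; apply: val_inj.
by rewrite cardsT card_prod !card_ord mulnC.
Qed.
End S.

Theorem theorem3p1 (v k : nat) :
  (0 < v)%N -> (0 < k)%N -> (k %| v)%N -> (v %| k ^ 2)%N ->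
  is_PSEDF v 2 k (k ^ 2 %/ v) (fam2 v k) /\ is_SEDF v 2 k (k ^ 2 %/ v) (fam2 v k).
Proof.
case: v => // n _ kpos kv vk.
have H01 g : delta_mult (AX n.+1 k) (AY n.+1 k) g = (k ^ 2 %/ n.+1)%N.
  by rewrite delta_alt2 key.
have H10 g : delta_mult (AY n.+1 k) (AX n.+1 k) g = (k ^ 2 %/ n.+1)%N.
  by rewrite delta_alt key.
have Hc i : #|fam2 n.+1 k i| = k.
  by rewrite /fam2; case: ifP => _; [rewrite cardAX | rewrite cardAY].
have one (i : 'I_2) : i != ord0 -> i = Ordinal (isT : (1 < 2)%N).
  move=> /eqP ne; apply: val_inj => /=; case: i ne => [[|[|m]] //= Hm] ne.
  by exfalso; apply: ne; apply: val_inj.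
split; split; try exact: Hc; try exact: isT; try exact: card_ord.
  move=> i j ij g; rewrite /fam2.
  case: (eqVneq i ord0) => hi; case: (eqVneq j ord0) => hj.
  - by move: ij; rewrite hi hj eqxx.
  - exact: H01.
  - exact: H10.
  - by move: ij; rewrite (one i hi) (one j hj) eqxx.
move=> i g; rewrite big_mkcond !big_ord_recl big_ord0 /= /fam2.
case: (eqVneq i ord0) => [-> | /one -> ] /=.
  rewrite addn0 /=. exact: H01.
rewrite H10; exact: addn0.
Qed.
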